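(* Let $K\ge1$, let $\Pi_1,\dots,\Pi_K$ be arbitrary probability distributions on $\mathcal{X}^1\times\mathcal{Y}$, let $(q_1,\dots,q_K)$ be a probability vector, let $\alpha\in(0,1)$, and let $n_1,\dots,n_K\ge0$ be fixed integers with $n=\sum_k n_k$. Suppose calibration data $(X_1,Y_1),\dots,(X_n,Y_n)$ are generated independently with, for each $k$ and each $i\in\{n_1+\dots+n_{k-1}+1,\dots,n_1+\dots+n_k\}$, $X_i^0=k$ and $(X_i^1,Y_i)\sim\Pi_k$, and the test point $(X_{n+1},Y_{n+1})$ is drawn independently with $\mathbb{P}\{X^0_{n+1}=k\}=q_k$ and $(X^1_{n+1},Y_{n+1})\mid X^0_{n+1}=k\sim\Pi_k$. Let $s:\mathcal{X}\times\mathcal{Y}\to\mathbb{R}$ be any fixed measurable score function and let $\widehat{C}_n$ be the corrected GWCP prediction set defined in the context. Then $\mathbb{P}\{Y_{n+1}\in\widehat{C}_n(X_{n+1})\}\ge1-\alpha$.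
   Context: Features are $x=(x^0,x^1)\in[K]\times\mathcal{X}^1$ with $x^0$ the group label. For a probability distribution $\mu$ on $\mathbb{R}\cup\{+\infty\}$ and $\tau\in(0,1]$, $\textnormal{Quantile}_{\tau}(\mu)=\inf\{t\in\mathbb{R}\cup\{+\infty\}:\mu([-\infty,t])\ge\tau\}$, and $\textnormal{Quantile}_{\tau}(\mu)=+\infty$ for $\tau>1$; $\delta_s$ is the point mass at $s$. With $s_i=s(X_i,Y_i)$, $\widehat{P}^{(k)}_{\textnormal{score}}=\frac{1}{n_k}\sum_{i\le n:\,X_i^0=k}\delta_{s_i}$ if $n_k>0$ and $\widehat{P}^{(k)}_{\textnormal{score}}=\delta_{+\infty}$ if $n_k=0$. Set $\alpha_k=\alpha-q_k/n_k$ if $n_k>0$ and $\alpha_k=\alpha$ if $n_k=0$, and $\widehat{q}_k=\textnormal{Quantile}_{1-\alpha_k}\big(\sum_{j=1}^K q_j\widehat{P}^{(j)}_{\textnormal{score}}\big)$ (interpreted as $+\infty$ if $\alpha_k<0$). The corrected GWCP set is $\widehat{C}_n(x)=\{y\in\mathcal{Y}: s(x,y)\le\widehat{q}_k\}$ for any $x$ with $x^0=k$. *)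

(* Defs.v *)
From HB Require Import structures.
From mathcomp Require Import all_boot all_order all_algebra.
From mathcomp Require Import all_classical all_reals all_analysis.
Set Implicit Arguments. Unset Strict Implicit. Unset Printing Implicit Defensive.
Import Order.TTheory GRing.Theory Num.Theory.
Local Open Scope ring_scope.
Local Open Scope classical_set_scope.

Definition grp_count (n K : nat) (g : 'I_n -> 'I_K) (k : 'I_K) : nat :=
  #|[set i | g i == k]|.

(* CDF at t (in R ∪ {+oo}) of the group-k empirical score distribution
   \hat P^(k)_score: (1/n_k) sum_{i : X_i^0 = k} delta_{s_i} if n_k > 0,
   delta_{+oo} if n_k = 0. *)
Definition emp_cdf (R : realType) (n K : nat) (g : 'I_n -> 'I_K)
  (sc : 'I_n -> R) (k : 'I_K) (t : \bar R) : R :=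
  if (grp_count g k > 0)%N then
    (#|[set i | (g i == k) && ((sc i)%:E <= t)%E]|%:R / (grp_count g k)%:R)
  else (if t == +oo%E then 1 else 0).

Definition mix_cdf (R : realType) (n K : nat) (q : 'I_K -> R)
  (g : 'I_n -> 'I_K) (sc : 'I_n -> R) (t : \bar R) : R :=
  \sum_(j < K) q j * emp_cdf g sc j t.

Definition mix_quantile (R : realType) (n K : nat) (q : 'I_K -> R)
  (g : 'I_n -> 'I_K) (sc : 'I_n -> R) (tau : R) : \bar R :=
  if tau > 1 then +oo%E
  else ereal_inf [set t : \bar R | t != -oo%E /\ tau <= mix_cdf q g sc t].

Definition alpha_k (R : realType) (n K : nat) (q : 'I_K -> R) (alpha : R)
  (g : 'I_n -> 'I_K) (k : 'I_K) : R :=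
  if (grp_count g k > 0)%N then alpha - q k / (grp_count g k)%:R else alpha.

Definition gwcp_qhat (R : realType) (n K : nat) (q : 'I_K -> R) (alpha : R)
  (g : 'I_n -> 'I_K) (sc : 'I_n -> R) (k : 'I_K) : \bar R :=
  if alpha_k q alpha g k < 0 then +oo%E
  else mix_quantile q g sc (1 - alpha_k q alpha g k).

(* Corrected GWCP prediction set: y in \hat C_n(x) iff s(x,y) <= \hat q_{x^0}.
   Here the calibration data are given by group labels g and (x1_i, y_i). *)
Definition gwcp_set (R : realType) (n K : nat) (X1 Y : Type)
  (s : 'I_K * X1 -> Y -> R) (q : 'I_K -> R) (alpha : R)
  (g : 'I_n -> 'I_K) (data : 'I_n -> X1 * Y) (x : 'I_K * X1) : set Y :=
  [set y | ((s x y)%:E <=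
    gwcp_qhat q alpha g (fun i => s (g i, (data i).1) (data i).2) x.1)%E].

(* Main.v *)
Require Import Defs.
From HB Require Import structures.
From mathcomp Require Import all_boot all_order all_algebra.
From mathcomp Require Import all_classical all_reals all_analysis.
Import Order.TTheory GRing.Theory Num.Theory.
Local Open Scope ring_scope.
Local Open Scope classical_set_scope.

From mathcomp Require Import measurable_realfun lra.
Set Implicit Arguments. Unset Strict Implicit.

Lemma ex_maxR (R : realType) (I : finType) (P : pred I) (F : I -> R) i1 :
  P i1 -> exists2 i, P i & forall j, P j -> F j <= F i.
Proof. by move=> Pi1; case: (@arg_maxP _ _ I i1 P F Pi1) => i Pi H; exists i. Qed.

Lemma ex_minR (R : realType) (I : finType) (P : pred I) (F : I -> R) i1 :
  P i1 -> exists2 i, P i & forall j, P j -> F i <= F j.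
Proof. by move=> Pi1; case: (@arg_minP _ _ I i1 P F Pi1) => i Pi H; exists i. Qed.

Section Det.
Variables (R : realType) (n K : nat) (q : 'I_K -> R) (g : 'I_n -> 'I_K) (alpha : R).
Hypothesis q0 : forall k, 0 <= q k.

Definition wt (i : 'I_n) : R := q (g i) / (grp_count g (g i))%:R.

Definition mixL (P : pred 'I_n) : R :=
  \sum_(j < K) q j * (if (0 < grp_count g j)%N then
     #|[set i | (g i == j) && P i]|%:R / (grp_count g j)%:R else 0).

Lemma wt_ge0 i : 0 <= wt i.
Proof. by rewrite /wt divr_ge0. Qed.

Lemma mixLE P : mixL P = \sum_(i < n) wt i * (P i)%:R.
Proof.
rewrite /mixL (partition_big g predT) //=; apply: eq_bigr => j _.
case: ifP => hj.
  rewrite -sum1_card natr_sum mulr_suml mulr_sumr.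
  idtac.
  rewrite (big_mkcond (fun i => i \in _)) /=.
  rewrite [RHS]big_mkcond /=; apply: eq_bigr => i _.
  have -> : (i \in [set i0 | (g i0 == j) && P i0]) = (g i == j) && P i by apply/idP/idP => [/set_mem|/mem_set].
  rewrite /wt.
  case: eqP => [<-|_] /=; last by [].
  by case: (P i); rewrite /= ?mul1r ?mulr1 ?mulr0 ?mul0r.
rewrite mulr0 big1 // => i /eqP gi.
move: hj; rewrite /grp_count lt0n => /negbFE/eqP/card0_eq/(_ i).
move=> h; have : i \in [set i0 | g i0 == j] by apply: mem_set; exact/eqP.
by rewrite h.
Qed.

Lemma mixL_le (P P' : pred 'I_n) : (forall i, P i -> P' i) -> mixL P <= mixL P'.
Proof.
move=> h; rewrite !mixLE; apply: ler_sum => i _; apply: ler_wpM2l; first exact: wt_ge0.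
by case: (P i) (h i) => //= ->.
Qed.

Lemma mixL0 : mixL pred0 = 0.
Proof. by rewrite mixLE big1 // => i _; rewrite mulr0. Qed.


Definition Lt (x : 'I_n -> R) (t : R) := mixL (fun i => x i < t).

Lemma mix_cdf_fin x r : mix_cdf q g x r%:E = mixL (fun i => x i <= r).
Proof.
rewrite /mix_cdf /emp_cdf /mixL; apply: eq_bigr => j _.
by case: ifP => _ //.
Qed.

Lemma alpha_k_le k : alpha_k q alpha g k <= alpha.
Proof.
rewrite /alpha_k; case: ifP => // _.
by rewrite lerBlDr lerDl divr_ge0.
Qed.

Lemma miss_iff x u k : alpha < 1 ->
  ~ (u%:E <= gwcp_qhat q alpha g x k)%E <->
  (0 <= alpha_k q alpha g k /\ 1 - alpha_k q alpha g k <= Lt x u).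
Proof.
move=> Ha1; have hak := alpha_k_le k.
rewrite /gwcp_qhat; have [ha|ha] := ltP (alpha_k q alpha g k) 0.
  split => [h|[h _]]; first by exfalso; apply: h; exact: leey.
  by exfalso; lra.
rewrite /mix_quantile ifF; last by apply/negbTE; rewrite -leNgt; lra.
set S := [set t : \bar R | t != -oo%E /\ 1 - alpha_k q alpha g k <= mix_cdf q g x t].
split.
  move=> h; split => //.
  have : (ereal_inf S < u%:E)%E by rewrite ltNge; apply/negP.
  case/ereal_inf_lt => t [tNy ht] tu.
  case: t tNy ht tu => [r| |] // _ ht tu.
  rewrite mix_cdf_fin in ht; apply: (le_trans ht); apply: mixL_le => i hi.
  by rewrite lte_fin in tu; apply: le_lt_trans hi tu.
move=> [_ hL] hle.
have [[i1 hi1]|hn] := pselect (exists i, x i < u); last first.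
  move: hL; rewrite /Lt (_ : (fun i => x i < u) = pred0); last first.
    by apply: funext => i; apply/negP => h; apply: hn; exists i.
  rewrite mixL0; lra.
have [i0 hi0 hmax] := @ex_maxR R _ (fun i => x i < u) x i1 hi1.
have Sr : S (x i0)%:E.
  split => //; rewrite mix_cdf_fin; apply: (le_trans hL); apply: mixL_le => i.
  exact: hmax.
have := ereal_inf_lbound Sr => h2.
have := le_trans hle h2; rewrite lee_fin => h3.
by move: hi0; rewrite ltNge h3.
Qed.

Definition upd (x : 'I_n -> R) (i : 'I_n) (u : R) := fun j => if j == i then u else x j.

Lemma swap_bound x i u : Lt (upd x i u) (x i) <= Lt x (x i) + wt i.
Proof.
rewrite /Lt !mixLE (bigD1 i) //= [X in _ <= X + _](bigD1 i) //= /upd eqxx ltxx mulr0 add0r.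
rewrite addrC lerD //; first by apply/ler_sum => j /negbTE ->.
by case: (u < x i); rewrite ?mulr1 ?mulr0 ?wt_ge0.
Qed.


Definition Q0 := \sum_(k < K | grp_count g k == 0%N) q k.

Lemma sum_wt : \sum_(k < K) q k = 1 -> \sum_(i < n) wt i = 1 - Q0.
Proof.
move=> hq.
have -> : \sum_(i < n) wt i = mixL predT.
  by rewrite mixLE; apply: eq_bigr => i _; rewrite mulr1.
have -> : 1 - Q0 = \sum_(k < K | (0 < grp_count g k)%N) q k.
  rewrite /Q0 -hq (bigID (fun k => (0 < grp_count g k)%N)) /=.
  have -> : \sum_(i < K | ~~ (0 < grp_count g i)%N) q i = \sum_(k < K | grp_count g k == 0%N) q k.
    by apply: eq_bigl => k; rewrite lt0n negbK.
  by rewrite addrK.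
rewrite /mixL [RHS]big_mkcond /=; apply: eq_bigr => j _.
case: ifP => hj; last by rewrite mulr0.
have -> : #|[set i | (g i == j) && predT i]| = grp_count g j.
  rewrite /grp_count; apply: eq_card => i.
  by apply/idP/idP => /set_mem /= h; apply: mem_set; move: h; rewrite /= andbT.
by rewrite divff ?mulr1 // pnatr_eq0 -lt0n.
Qed.

Lemma Lt_le1 x t : Lt x t <= \sum_(i < n) wt i.
Proof.
rewrite /Lt mixLE; apply: ler_sum => i _.
by case: (_ < _); rewrite ?mulr1 ?mulr0 ?wt_ge0.
Qed.

Lemma pointwise x : \sum_(k < K) q k = 1 -> 0 <= alpha ->
  \sum_(i < n) wt i * ((1 - alpha <= Lt x (x i))%R)%:R + Q0 * ((1 - alpha <= 1 - Q0)%R)%:R <= alpha.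
Proof.
move=> hq ha0; have sw := sum_wt hq.
have hQ0 : 0 <= Q0 by apply: sumr_ge0 => k _.
have [[i1 h1]|hn] := pselect (exists i, 1 - alpha <= Lt x (x i)); last first.
  rewrite big1; last first.
    move=> i _; case: (boolP (1 - alpha <= Lt x (x i))) => h; last by rewrite mulr0.
    by exfalso; apply: hn; exists i.
  rewrite add0r; case: (boolP (1 - alpha <= 1 - Q0)) => h; last by rewrite mulr0.
  by rewrite mulr1; lra.
have [i0 h0 hmin] := @ex_minR R _ (fun i => 1 - alpha <= Lt x (x i)) x i1 h1.
have hLt := Lt_le1 x (x i0).
have key : \sum_(i < n) wt i * ((1 - alpha <= Lt x (x i))%R)%:R + Lt x (x i0) <= 1 - Q0.
  have -> : Lt x (x i0) = \sum_(i < n) wt i * ((x i < x i0)%R)%:R by rewrite /Lt mixLE.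
  rewrite -sw -big_split /=; apply: ler_sum => i _.
  rewrite -mulrDr; rewrite -[X in _ <= X]mulr1; apply: ler_wpM2l; first exact: wt_ge0.
  case: (boolP (1 - alpha <= Lt x (x i))) => hs; last by case: (x i < x i0); rewrite /= ?add0r.
  by rewrite ltNge hmin // addr0.
have -> : (1 - alpha <= 1 - Q0) = true by apply/idP; apply: (le_trans h0); rewrite -sw.
rewrite /= mulr1; move: key h0 sw; lra.
Qed.

End Det.
Section PL.
Context d (Omega : measurableType d) (R : realType) (P : probability Omega R).
Variables (T : Type) (G : set (set T)) (setIG : setI_closed G).

Lemma preimage_setD' (U V : Type) (f : U -> V) A B : f @^-1` (A `\` B) = f @^-1` A `\` f @^-1` B.
Proof. by apply/seteqP; split. Qed.

Definition pmeas (f : Omega -> T) := forall A, G A -> measurable (f @^-1` A).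

Lemma pmeas_sigma f : pmeas f -> forall A, <<s G>> A -> measurable (f @^-1` A).
Proof.
move=> hf; apply: smallest_sub => //; split.
- by rewrite preimage_set0.
- by move=> A mA; rewrite preimage_setD' preimage_setT; apply: measurableD.
- by move=> F mF; rewrite preimage_bigcup; apply: bigcupT_measurable.
Qed.

Lemma pl_eq (E1 E2 : set Omega) (f1 f2 : Omega -> T) (c1 c2 : R) :
  measurable E1 -> measurable E2 -> pmeas f1 -> pmeas f2 ->
  (c1%:E * P E1 = c2%:E * P E2)%E ->
  (forall A, G A -> c1%:E * P (E1 `&` f1 @^-1` A) = c2%:E * P (E2 `&` f2 @^-1` A))%E ->
  forall A, <<s G>> A -> (c1%:E * P (E1 `&` f1 @^-1` A) = c2%:E * P (E2 `&` f2 @^-1` A))%E.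
Proof.
move=> mE1 mE2 hf1 hf2 hT hG.
pose H := [set A | measurable (f1 @^-1` A) /\ measurable (f2 @^-1` A) /\
   (c1%:E * P (E1 `&` f1 @^-1` A) = c2%:E * P (E2 `&` f2 @^-1` A))%E].
suff : <<s G>> `<=` H by move=> h A /h [_ []].
apply: (@lambda_system_subset _ G setIG setT H) => //; last first.
- by move=> A GA; split; [exact: hf1|split; [exact: hf2|exact: hG]].
split => //.
- by split; rewrite ?preimage_setT //; split => //; rewrite !setIT.
- move=> A B BA [mA1 [mA2 eA]] [mB1 [mB2 eB]]; split; first by rewrite preimage_setD'; apply: measurableD.
  split; first by rewrite preimage_setD'; apply: measurableD.
  have key (E : set Omega) (f : Omega -> T) c : measurable E -> measurable (f @^-1` A) ->
      measurable (f @^-1` B) ->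
      (c%:E * P (E `&` f @^-1` (A `\` B)) = c%:E * P (E `&` f @^-1` A) - c%:E * P (E `&` f @^-1` B))%E.
    move=> mE mA mB.
    have -> : E `&` f @^-1` (A `\` B) = (E `&` f @^-1` A) `\` (E `&` f @^-1` B).
      by rewrite preimage_setD' setDIr setIDA; apply/seteqP; split => x /=; tauto.
    rewrite measureD; [|exact: measurableI|exact: measurableI|].
    + have -> : (E `&` f @^-1` A) `&` (E `&` f @^-1` B) = E `&` f @^-1` B.
        by apply/seteqP; split => x /=; [tauto|move=> [? ?]; split; [split=> //; exact: BA|by []]].
      rewrite muleBr //; rewrite fin_num_adde_defr // fin_num_measure //; exact: measurableI.
    + by rewrite (le_lt_trans (probability_le1 _ _)) ?ltry //; exact: measurableI.
  by rewrite key // key // eA eB.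
- move=> F ndF HF.
  have m1 n : measurable (f1 @^-1` F n) by case: (HF n).
  have m2 n : measurable (f2 @^-1` F n) by case: (HF n) => _ [].
  split; first by rewrite preimage_bigcup; apply: bigcupT_measurable.
  split; first by rewrite preimage_bigcup; apply: bigcupT_measurable.
  have cv (E : set Omega) (f : Omega -> T) c : measurable E -> (forall n, measurable (f @^-1` F n)) ->
     ((fun n => c%:E * P (E `&` f @^-1` F n)) @ \oo --> c%:E * P (E `&` f @^-1` \bigcup_n F n))%E.
    move=> mE mf; apply: cvgeZl => //.
    rewrite preimage_bigcup setI_bigcupr.
    apply: nondecreasing_cvg_mu.
    + by move=> n; apply: measurableI.
    + by apply: bigcupT_measurable => n; apply: measurableI.
    + move=> m n mn; apply/subsetPset => x [Ex Fx]; split => //.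
      by move/subsetPset: (ndF m n mn); apply.
  have h1 := cv E1 f1 c1 mE1 m1.
  have h2 := cv E2 f2 c2 mE2 m2.
  have e : (fun n => c1%:E * P (E1 `&` f1 @^-1` F n))%E = (fun n => c2%:E * P (E2 `&` f2 @^-1` F n))%E.
    by apply: funext => n; case: (HF n) => _ [].
  rewrite e in h1; exact: (cvg_unique _ h1 h2).
Qed.

End PL.
Section Tup.
Variables (R : realType) (n : nat).
Definition TT := (('I_n -> R) * R)%type.
HB.instance Definition _ := gen_eqMixin TT.
HB.instance Definition _ := gen_choiceMixin TT.
HB.instance Definition _ := isPointed.Build TT (fun _ => 0, 0).

Definition tcoord (o : option 'I_n) (xu : TT) : R :=
  if o is Some j then xu.1 j else xu.2.

Definition RectSet (a : option 'I_n -> \bar R) : set TT :=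
  [set xu | forall o, ((tcoord o xu)%:E <= a o)%E].

Definition Rect : set (set TT) := [set A | exists a, A = RectSet a].

Lemma Rect_setI : setI_closed Rect.
Proof.
move=> A B [a ->] [b ->]; exists (fun o => Order.min (a o) (b o)).
apply/seteqP; split => xu /=.
  by move=> [ha hb] o; rewrite le_min ha hb.
by move=> h; split => o; have := h o; rewrite le_min => /andP[].
Qed.

Definition TM := g_sigma_algebraType Rect.

Lemma meas_le o (r : R) : measurable [set xu : TM | tcoord o xu <= r].
Proof.
apply: sub_sigma_algebra; exists (fun o' => if o' == o then r%:E else +oo%E).
apply/seteqP; split => xu /=.
  by move=> h o'; case: eqP => [->|_]; rewrite ?lee_fin ?leey.
by move=> /(_ o); rewrite eqxx lee_fin.
Qed.

Lemma meas_lt o1 o2 : measurable [set xu : TM | tcoord o1 xu < tcoord o2 xu].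
Proof.
have -> : [set xu : TM | tcoord o1 xu < tcoord o2 xu] =
   \bigcup_(r : rat) ([set xu : TM | tcoord o1 xu <= ratr r] `&` ~` [set xu : TM | tcoord o2 xu <= ratr r]).
  apply/seteqP; split => xu /=.
    move=> /rat_in_itvoo [r]; rewrite in_itv /= => /andP[h1 h2].
    by exists r => //=; split; [exact: ltW| apply/negP; rewrite -ltNge].
  by move=> [r _ /= [h1 /negP]]; rewrite -ltNge => h2; apply: le_lt_trans h1 h2.
apply: bigcupT_measurable_rat => r; apply: measurableI; first exact: meas_le.
by apply: measurableC; exact: meas_le.
Qed.

Lemma meas_indic_lt o1 o2 :
  measurable_fun setT (fun xu : TM => ((tcoord o1 xu < tcoord o2 xu)%R)%:R : R).
Proof.
have -> : (fun xu : TM => ((tcoord o1 xu < tcoord o2 xu)%R)%:R : R) =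
    \1_[set xu : TM | tcoord o1 xu < tcoord o2 xu].
  apply: funext => xu; rewrite indicE.
  have -> // : (xu \in [set xu : TM | tcoord o1 xu < tcoord o2 xu]) = (tcoord o1 xu < tcoord o2 xu).
  by apply/idP/idP => [/set_mem|/mem_set].
by apply: measurable_indic; exact: meas_lt.
Qed.

Lemma meas_wsum (w : 'I_n -> R) (f : 'I_n -> option 'I_n) o :
  measurable_fun setT (fun xu : TM => \sum_(i < n) w i * ((tcoord (f i) xu < tcoord o xu)%R)%:R).
Proof.
apply: measurable_sum => i; apply: measurable_funM; first exact: measurable_cst.
exact: meas_indic_lt.
Qed.

Lemma meas_ge (f : TM -> R) (c : R) : measurable_fun setT f -> measurable [set xu | c <= f xu].
Proof.
move=> mf; have := mf measurableT `[c, +oo[%classic (measurable_itv _).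
rewrite setTI; congr measurable; apply/seteqP; split => xu /=; rewrite in_itv /= andbT //.
Qed.

End Tup.
Lemma sum_prob_le d (Omega : measurableType d) (R : realType) (P : probability Omega R)
  n (A : 'I_n -> set Omega) (w : 'I_n -> R) (c : R) :
  (forall i, measurable (A i)) -> (forall i, 0 <= w i) ->
  (forall x, \sum_(i < n) w i * (x \in A i)%:R <= c) ->
  \sum_(i < n) w i * fine (P (A i)) <= c.
Proof.
move=> mA w0 hc.
have mI i : measurable_fun setT (fun x => (\1_(A i) x)%:E : \bar R).
  by apply/measurable_EFinP; apply: measurable_indic.
rewrite -lee_fin -sumEFin.
have -> : (\sum_(i < n) (w i * fine (P (A i)))%:E =
    \sum_(i < n) \int[P]_(x in setT) ((w i)%:E * (\1_(A i) x)%:E))%E.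
  apply: eq_bigr => i _; rewrite ge0_integralZl_EFin //; try by move=> x _; rewrite lee_fin indicE.
  by rewrite integral_indic // setIT EFinM fineK //; exact: fin_num_measure.
have mJ i : measurable_fun setT (fun x => ((w i)%:E * (\1_(A i) x)%:E)%E : \bar R).
  under eq_fun do rewrite -EFinM.
  apply/measurable_EFinP; apply: measurable_funM => //.
have pJ i x : (0 <= (w i)%:E * (\1_(A i) x)%:E)%E by rewrite -EFinM lee_fin mulr_ge0 // indicE.
rewrite -ge0_integral_sum //.
have -> : (c%:E = \int[P]_(x in setT) (cst c%:E) x)%E.
  rewrite integral_cst //; have hT : (c%:E * P setT = c%:E)%E by rewrite probability_setT mule1.
  exact: (esym hT).
apply: ge0_le_integral => //.
- by move=> x _; apply: sume_ge0 => i _.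
- by apply: emeasurable_sum => i; exact: mJ.
- move=> x _; rewrite sumEFin /= lee_fin; apply: le_trans (hc x).
  by apply: ler_sum => i _; rewrite indicE.
Qed.

Unset Implicit Arguments. Set Strict Implicit.

Section Main.
Variables (R : realType) (d : measure_display) (Omega : measurableType d)
  (P : probability Omega R)
  (d1 d2 : measure_display) (X1 : measurableType d1) (Y : measurableType d2)
  (K : nat) (Pi : 'I_K -> probability (X1 * Y)%type R)
  (q : 'I_K -> R) (Hq0 : forall k, 0 <= q k) (Hq1 : \sum_(k < K) q k = 1)
  (alpha : R) (Ha0 : 0 < alpha) (Ha1 : alpha < 1)
  (n : nat) (g : 'I_n -> 'I_K)
  (Z : 'I_n -> Omega -> (X1 * Y)%type)
  (G : Omega -> 'I_K) (W : Omega -> (X1 * Y)%type)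
  (HZm : forall i, measurable_fun setT (Z i))
  (HWm : measurable_fun setT W)
  (HGm : forall k, measurable (G @^-1` [set k]))
  (HZlaw : forall i A, measurable A -> P (Z i @^-1` A) = Pi (g i) A)
  (Htest : forall k B, measurable B ->
      P (G @^-1` [set k] `&` W @^-1` B) = ((q k)%:E * Pi k B)%E)
  (Hindep : forall (A : 'I_n -> set (X1 * Y)%type) (k : 'I_K) (B : set (X1 * Y)%type),
      (forall i, measurable (A i)) -> measurable B ->
      P ((\bigcap_i (Z i @^-1` A i)) `&` (G @^-1` [set k] `&` W @^-1` B))
      = ((\prod_(i < n) P (Z i @^-1` A i)) * P (G @^-1` [set k] `&` W @^-1` B))%E)
  (s : 'I_K * X1 -> Y -> R)
  (Hs : forall k, measurable_fun setT (fun xy : (X1 * Y)%type => s (k, xy.1) xy.2)).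

Local Notation Gk k := (G @^-1` [set k]).

Definition Tsc i w := s (g i, (Z i w).1) (Z i w).2.
Definition Vk k w : TT R n := (fun i => Tsc i w, s (k, (W w).1) (W w).2).
Definition f0 w : TT R n := (fun i => Tsc i w, 0).
Definition sig i (xu : TT R n) : TT R n := (upd xu.1 i xu.2, xu.1 i).
Definition Aset k (e : \bar R) : set (X1 * Y)%type := [set xy | ((s (k, xy.1) xy.2)%:E <= e)%E].

Lemma EFin_le_meas (e : \bar R) : measurable [set r : R | (r%:E <= e)%E].
Proof.
case: e => [r| |].
- have -> : [set r0 : R | (r0%:E <= r%:E)%E] = `]-oo, r]%classic.
    by apply/seteqP; split => x /=; rewrite in_itv /= lee_fin.
  exact: measurable_itv.
- have -> : [set r0 : R | (r0%:E <= +oo)%E] = setT by apply/seteqP; split => x //= _; exact: leey.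
  exact: measurableT.
- have -> : [set r0 : R | (r0%:E <= -oo)%E] = set0 by apply/seteqP; split => x //=; rewrite leeNy_eq.
  exact: measurable0.
Qed.

Lemma Aset_meas k e : measurable (Aset k e).
Proof.
have := Hs k measurableT _ (EFin_le_meas e); rewrite setTI; congr measurable.
Qed.

Lemma preZ i A : measurable A -> measurable (Z i @^-1` A).
Proof. by move=> mA; have := HZm i measurableT _ mA; rewrite setTI. Qed.

Lemma preW A : measurable A -> measurable (W @^-1` A).
Proof. by move=> mA; have := HWm measurableT _ mA; rewrite setTI. Qed.

Lemma capZ_meas (A : 'I_n -> set (X1 * Y)%type) : (forall i, measurable (A i)) ->
  measurable (\bigcap_i (Z i @^-1` A i)).
Proof. by move=> mA; apply: fin_bigcap_measurable; [exact: finite_finset|move=> i _; exact: preZ]. Qed.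


Lemma PGk k : P (Gk k) = (q k)%:E.
Proof.
have := Htest k setT measurableT; rewrite preimage_setT setIT => ->.
by rewrite probability_setT mule1.
Qed.

Lemma partG (A : set Omega) : measurable A ->
  P A = (\sum_(k < K) P (Gk k `&` A))%E.
Proof.
move=> mA.
have eA : A = \bigcup_(k in [set: 'I_K]) (Gk k `&` A).
  apply/seteqP; split => [w Aw|w [k _ [_ Aw]] //].
  by exists (G w) => //.
rewrite {1}eA measure_fin_bigcup //.
- have -> : [set: 'I_K] = [set` enum 'I_K] by apply/seteqP; split => k //= _; rewrite mem_enum.
  by rewrite -fsbig_seq ?enum_uniq // big_enum /=.
- exact: finite_finset.
- apply/trivIsetP => i j _ _ ij; apply/seteqP; split => // w [[/= Gi _] [/= Gj _]].
  by move: ij; rewrite -Gi -Gj eqxx.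
- by move=> k _; apply: measurableI.
Qed.

Lemma cal_indep (A : 'I_n -> set (X1 * Y)%type) : (forall i, measurable (A i)) ->
  P (\bigcap_i (Z i @^-1` A i)) = (\prod_(i < n) P (Z i @^-1` A i))%E.
Proof.
move=> mA; rewrite (partG _ (capZ_meas _ mA)).
transitivity (\sum_(k < K) ((\prod_(i < n) P (Z i @^-1` A i)) * (q k)%:E))%E.
  apply: eq_bigr => k _.
  have -> : Gk k `&` \bigcap_i Z i @^-1` A i = \bigcap_i Z i @^-1` A i `&` (Gk k `&` W @^-1` setT).
    by rewrite preimage_setT setIT setIC.
  by rewrite Hindep // preimage_setT setIT PGk.
rewrite -ge0_sume_distrr; last by move=> k _; rewrite lee_fin.
by rewrite sumEFin Hq1 mule1.
Qed.

Lemma pre_V k a : Vk k @^-1` RectSet a =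
  \bigcap_i (Z i @^-1` Aset (g i) (a (Some i))) `&` W @^-1` Aset k (a None).
Proof.
apply/seteqP; split => w /=.
  by move=> h; split; [move=> i _; exact: (h (Some i))|exact: (h None)].
by move=> [h1 h2] [i|] //=; apply: h1.
Qed.

Lemma pre_sV k i a : (sig i \o Vk k) @^-1` RectSet a =
  \bigcap_j (Z j @^-1` (if j == i then Aset (g j) (a None) else Aset (g j) (a (Some j))))
   `&` W @^-1` Aset k (a (Some i)).
Proof.
apply/seteqP; split => w /=.
  move=> h; split; last by have := h (Some i); rewrite /= /upd eqxx.
  move=> j _ /=; case: eqP => [->|/eqP ji]; first exact: (h None).
  by have := h (Some j); rewrite /= /upd (negbTE ji).
move=> [h1 h2] [j|] /=; last by have := h1 i I; rewrite /= eqxx.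
rewrite /upd; case: eqP => [->|/eqP ji] //.
by have := h1 j I; rewrite /= (negbTE ji).
Qed.

Lemma pre_f0 a : f0 @^-1` RectSet a =
  \bigcap_i (Z i @^-1` Aset (g i) (a (Some i))) `&` [set _ | (0%:E <= a None)%E].
Proof.
apply/seteqP; split => w /=.
  by move=> h; split; [move=> i _; exact: (h (Some i))|exact: (h None)].
by move=> [h1 h2] [i|] //=; apply: h1.
Qed.

Lemma const_meas (b : Prop) : measurable [set _ : Omega | b].
Proof.
have [hb|hb] := pselect b.
  by have -> : [set _ : Omega | b] = setT by apply/seteqP; split.
by have -> : [set _ : Omega | b] = set0 by apply/seteqP; split.
Qed.

Lemma pmeas_V k : pmeas (@Rect R n) (Vk k).
Proof.
move=> _ [a ->]; rewrite pre_V; apply: measurableI.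
  by apply: capZ_meas => i; exact: Aset_meas.
by apply: preW; exact: Aset_meas.
Qed.

Lemma pmeas_sV k i : pmeas (@Rect R n) (sig i \o Vk k).
Proof.
move=> _ [a ->]; rewrite pre_sV; apply: measurableI.
  by apply: capZ_meas => j; case: eqP => _; exact: Aset_meas.
by apply: preW; exact: Aset_meas.
Qed.

Lemma pmeas_f0 : pmeas (@Rect R n) f0.
Proof.
move=> _ [a ->]; rewrite pre_f0; apply: measurableI; last exact: const_meas.
by apply: capZ_meas => i; exact: Aset_meas.
Qed.

Lemma PV_rect k a : P (Gk k `&` Vk k @^-1` RectSet a) =
  ((\prod_(i < n) Pi (g i) (Aset (g i) (a (Some i)))) * ((q k)%:E * Pi k (Aset k (a None))))%E.
Proof.
rewrite pre_V setICA Hindep; last exact: Aset_meas; last by move=> i; exact: Aset_meas.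
rewrite Htest; last exact: Aset_meas.
by congr (_ * _)%E; apply: eq_bigr => i _; apply: HZlaw; exact: Aset_meas.
Qed.

Lemma PsV_rect k i a : P (Gk k `&` (sig i \o Vk k) @^-1` RectSet a) =
  ((\prod_(j < n) Pi (g j) (if j == i then Aset (g j) (a None) else Aset (g j) (a (Some j))))
    * ((q k)%:E * Pi k (Aset k (a (Some i)))))%E.
Proof.
rewrite pre_sV setICA Hindep; last exact: Aset_meas; last by move=> j; case: eqP => _; exact: Aset_meas.
rewrite Htest; last exact: Aset_meas.
by congr (_ * _)%E; apply: eq_bigr => j _; apply: HZlaw; case: eqP => _; exact: Aset_meas.
Qed.

Lemma swap_rect k i a : g i = k ->
  P (Gk k `&` Vk k @^-1` RectSet a) = P (Gk k `&` (sig i \o Vk k) @^-1` RectSet a).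
Proof.
move=> gi; rewrite PV_rect PsV_rect (bigD1 i) //= [in RHS](bigD1 i) //= eqxx.
have -> : (\prod_(j < n | j != i) Pi (g j) (if j == i then Aset (g j) (a None) else Aset (g j) (a (Some j))) =
   \prod_(j < n | j != i) Pi (g j) (Aset (g j) (a (Some j))))%E.
  by apply: eq_bigr => j /negbTE ->.
rewrite gi.
have e : forall x y r c : \bar R, (x * r * (c * y) = y * r * (c * x))%E.
  move=> x y r c; rewrite [(x * r)%E]muleC [(y * r)%E]muleC -!muleA; congr (r * _)%E.
  by rewrite muleCA [in RHS]muleCA (muleC x y).
exact: e.
Qed.

Lemma swap_meas k i (A : set (TT R n)) : <<s (@Rect R n) >> A -> g i = k ->
  P (Gk k `&` Vk k @^-1` A) = P (Gk k `&` (sig i \o Vk k) @^-1` A).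
Proof.
move=> mA gi.
have h : forall B, Rect B -> (1%:E * P (Gk k `&` Vk k @^-1` B) = 1%:E * P (Gk k `&` (sig i \o Vk k) @^-1` B))%E.
  by move=> _ [a ->]; rewrite !mul1e; exact: swap_rect.
have := pl_eq (P := P) (@Rect_setI R n) (HGm k) (HGm k) (pmeas_V k) (pmeas_sV k i) (erefl _) h mA.
by rewrite !mul1e.
Qed.

Lemma indep_rect k a : (1%:E * P (Gk k `&` f0 @^-1` RectSet a) = (q k)%:E * P (setT `&` f0 @^-1` RectSet a))%E.
Proof.
rewrite mul1e setTI pre_f0.
have [hb|hb] := pselect (0%:E <= a None)%E; last first.
  have -> : [set _ : Omega | (0%:E <= a None)%E] = set0 by apply/seteqP; split.
  by rewrite !setI0 measure0 mule0.
have -> : [set _ : Omega | (0%:E <= a None)%E] = setT by apply/seteqP; split.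
rewrite !setIT cal_indep; last by move=> i; exact: Aset_meas.
have -> : Gk k `&` \bigcap_i Z i @^-1` Aset (g i) (a (Some i)) =
   \bigcap_i Z i @^-1` Aset (g i) (a (Some i)) `&` (Gk k `&` W @^-1` setT).
  by rewrite preimage_setT setIT setIC.
rewrite Hindep //; last by move=> i; exact: Aset_meas.
by rewrite preimage_setT setIT PGk muleC.
Qed.

Lemma indep_meas k (A : set (TT R n)) : <<s (@Rect R n) >> A ->
  P (Gk k `&` f0 @^-1` A) = ((q k)%:E * P (f0 @^-1` A))%E.
Proof.
move=> mA.
have h : forall B, Rect B -> (1%:E * P (Gk k `&` f0 @^-1` B) = (q k)%:E * P (setT `&` f0 @^-1` B))%E.
  by move=> _ [a ->]; exact: indep_rect.
have h0 : (1%:E * P (Gk k) = (q k)%:E * P setT)%E by rewrite mul1e PGk probability_setT mule1.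
have := pl_eq (P := P) (@Rect_setI R n) (HGm k) measurableT pmeas_f0 pmeas_f0 h0 h mA.
by rewrite mul1e setTI.
Qed.


Definition Mk k : set (TT R n) :=
  [set xu | 0 <= alpha_k q alpha g k /\ 1 - alpha_k q alpha g k <= Lt q g xu.1 xu.2].
Definition Hi i : set (TT R n) := [set xu | 1 - alpha <= Lt q g xu.1 (xu.1 i)].

Lemma Mk_meas k : <<s (@Rect R n) >> (Mk k).
Proof.
case: (boolP (0 <= alpha_k q alpha g k)) => h.
  have -> : Mk k = [set xu : TM R n | 1 - alpha_k q alpha g k <=
       \sum_(i < n) wt q g i * ((tcoord (Some i) xu < tcoord None xu)%R)%:R].
    apply/seteqP; split => xu /=; rewrite /Mk /= /Lt mixLE; first by move=> [_ ->].
    by move=> hh; split.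
  exact: (meas_ge _ (meas_wsum (wt q g) (fun i => Some i) None)).
have -> : Mk k = set0.
  by apply/seteqP; split => xu // [h' _]; move: h; rewrite h'.
exact: (@measurable0 _ (TM R n)).
Qed.

Lemma Hi_meas i : <<s (@Rect R n) >> (Hi i).
Proof.
have -> : Hi i = [set xu : TM R n | 1 - alpha <=
       \sum_(j < n) wt q g j * ((tcoord (Some j) xu < tcoord (Some i) xu)%R)%:R].
  by apply/seteqP; split => xu /=; rewrite /Hi /= /Lt mixLE.
exact: (meas_ge _ (meas_wsum (wt q g) (fun j => Some j) (Some i))).
Qed.

Lemma grp_pos i : (0 < grp_count g (g i))%N.
Proof.
rewrite lt0n; apply/negP => /eqP/card0_eq/(_ i).
have : i \in [set j | g j == g i] by apply: mem_set => /=.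
by move=> ->.
Qed.

Definition GkM k := Gk k `&` Vk k @^-1` Mk k.

Lemma GkM_meas k : measurable (GkM k).
Proof. apply: measurableI; first exact: HGm. exact: (pmeas_sigma (pmeas_V k) (Mk_meas k)). Qed.

Lemma f0H_meas i : measurable (f0 @^-1` Hi i).
Proof. exact: (pmeas_sigma pmeas_f0 (Hi_meas i)). Qed.

Lemma key_a k i : g i = k -> (P (GkM k) <= (q k)%:E * P (f0 @^-1` Hi i))%E.
Proof.
move=> gi; rewrite /GkM (swap_meas _ _ _ (Mk_meas k) gi) -(indep_meas _ _ (Hi_meas i)).
apply: le_measure; rewrite ?inE.
- apply: measurableI; first exact: HGm. exact: (pmeas_sigma (pmeas_sV k i) (Mk_meas k)).
- apply: measurableI; first exact: HGm. exact: f0H_meas.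
move=> w [Gw [h0 hL]]; split => //.
rewrite /Hi /=.
have hs := swap_bound g Hq0 (fun j => Tsc j w) i (s (k, (W w).1) (W w).2).
have hak : alpha_k q alpha g k = alpha - wt q g i.
  by rewrite /alpha_k -gi ifT ?grp_pos // /wt.
move: hL hs; rewrite hak /=; lra.
Qed.


Lemma Pfin (A : set Omega) : measurable A -> P A = (fine (P A))%:E.
Proof. by move=> mA; rewrite fineK //; exact: fin_num_measure. Qed.

Lemma key_a_real k i : g i = k -> fine (P (GkM k)) <= q k * fine (P (f0 @^-1` Hi i)).
Proof.
move=> gi; have := key_a _ _ gi.
by rewrite (Pfin _ (GkM_meas k)) (Pfin _ (f0H_meas i)) -EFinM lee_fin.
Qed.

Lemma bound_pos k : (0 < grp_count g k)%N ->
  fine (P (GkM k)) <= \sum_(i < n | g i == k) wt q g i * fine (P (f0 @^-1` Hi i)).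
Proof.
move=> hk.
have hc : \sum_(i < n | g i == k) (1:R) = (grp_count g k)%:R.
  have -> : grp_count g k = #|[pred i : 'I_n | g i == k]|.
    rewrite /grp_count; apply: eq_card => i; rewrite [in RHS]inE.
    by apply/idP/idP => [/set_mem|/mem_set].
  by rewrite -sum1_card natr_sum; apply: eq_bigl => i; rewrite inE.
have h : (grp_count g k)%:R * fine (P (GkM k)) <= \sum_(i < n | g i == k) q k * fine (P (f0 @^-1` Hi i)).
  rewrite -hc mulr_suml; apply: ler_sum => i /eqP gi; rewrite mul1r; exact: key_a_real.
have hN : 0 < (grp_count g k)%:R :> R by rewrite ltr0n.
have -> : \sum_(i < n | g i == k) wt q g i * fine (P (f0 @^-1` Hi i)) =
    ((grp_count g k)%:R)^-1 * \sum_(i < n | g i == k) q k * fine (P (f0 @^-1` Hi i)).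
  rewrite mulr_sumr; apply: eq_bigr => i /eqP gi.
  by rewrite /wt gi mulrA [_^-1 * _]mulrC.
have hI : 0 <= ((grp_count g k)%:R : R)^-1 by rewrite invr_ge0 ltW.
have := ler_wpM2l hI h.
by rewrite mulrA mulVf ?mul1r // gt_eqF.
Qed.

Lemma bound_zero k : grp_count g k = 0%N ->
  fine (P (GkM k)) <= q k * ((1 - alpha <= 1 - Q0 q g)%R)%:R.
Proof.
move=> hk; case: (boolP (1 - alpha <= 1 - Q0 q g)) => hc.
  rewrite mulr1 -lee_fin -(Pfin _ (GkM_meas k)) -PGk.
  apply: le_measure; rewrite ?inE; [exact: GkM_meas|exact: HGm|].
  by move=> w [].
have -> : GkM k = set0.
  apply/seteqP; split => w // [_ [_ hL]].
  have hak : alpha_k q alpha g k = alpha by rewrite /alpha_k hk.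
  have := Lt_le1 g Hq0 (fun i => Tsc i w) (s (k, (W w).1) (W w).2).
  rewrite (sum_wt g Hq1) => h1.
  move: hc; rewrite -hak => /negP; apply; exact: le_trans hL h1.
by rewrite measure0 mulr0.
Qed.

Lemma total : \sum_(k < K) fine (P (GkM k)) <=
  \sum_(i < n) wt q g i * fine (P (f0 @^-1` Hi i)) + Q0 q g * ((1 - alpha <= 1 - Q0 q g)%R)%:R.
Proof.
set c01 := ((1 - alpha <= 1 - Q0 q g)%R)%:R.
set F := fun i => wt q g i * fine (P (f0 @^-1` Hi i)).
rewrite (bigID (fun k => (0 < grp_count g k)%N)) /=.
apply: lerD.
  apply: (@le_trans _ _ (\sum_(k < K | (0 < grp_count g k)%N) \sum_(i < n | g i == k) F i)).
    by apply: ler_sum => k hk; exact: bound_pos.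
  rewrite [X in _ <= X](partition_big g predT) //= [X in _ <= X](bigID (fun k => (0 < grp_count g k)%N)) /=.
  rewrite [X in _ <= _ + X]big1 ?addr0 // => k hk.
  by apply: big1 => i /eqP gi; exfalso; move: hk; rewrite -gi grp_pos.
rewrite /Q0 mulr_suml.
have -> : \sum_(k < K | grp_count g k == 0%N) q k * c01 = \sum_(k < K | ~~ (0 < grp_count g k)%N) q k * c01.
  by apply: eq_bigl => k; rewrite lt0n negbK.
apply: ler_sum => k; rewrite lt0n negbK => /eqP hk; exact: bound_zero.
Qed.

Lemma final_sum : \sum_(i < n) wt q g i * fine (P (f0 @^-1` Hi i)) + Q0 q g * ((1 - alpha <= 1 - Q0 q g)%R)%:R <= alpha.
Proof.
set c01 := ((1 - alpha <= 1 - Q0 q g)%R)%:R.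
suff : \sum_(i < n) wt q g i * fine (P (f0 @^-1` Hi i)) <= alpha - Q0 q g * c01 by lra.
apply: sum_prob_le; [exact: f0H_meas| exact: wt_ge0 |].
move=> w.
have := pointwise g Hq0 (fun i => Tsc i w) Hq1 (ltW Ha0).
have -> : \sum_(i < n) wt q g i * (w \in f0 @^-1` Hi i)%:R =
   \sum_(i < n) wt q g i * ((1 - alpha <= Lt q g (fun j => Tsc j w) (Tsc i w))%R)%:R.
  apply: eq_bigr => i _.
  have -> // : (w \in f0 @^-1` Hi i) = (1 - alpha <= Lt q g (fun j => Tsc j w) (Tsc i w))%R.
  by apply/idP/idP => [/set_mem|/mem_set].
rewrite -/c01; lra.
Qed.


Lemma main_result :
  ((1 - alpha)%:E <=
   P [set w | gwcp_set s q alpha g (fun i => Z i w) (G w, (W w).1) (W w).2])%E.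
Proof.
set C := [set w | gwcp_set s q alpha g (fun i => Z i w) (G w, (W w).1) (W w).2].
have hpt : forall w, ~ C w <-> Mk (G w) (Vk (G w) w).
  move=> w; exact: (miss_iff g Hq0 (fun i => Tsc i w) (s (G w, (W w).1) (W w).2) (G w) Ha1).
have eC : ~` C = \bigcup_(k in [set: 'I_K]) GkM k.
  apply/seteqP; split => w.
    by move=> nC; exists (G w) => //; split => //; apply/hpt.
  by move=> [k _ [/= Gw hM]]; apply/hpt; rewrite Gw.
have mC : measurable (~` C).
  rewrite eC; apply: fin_bigcup_measurable; [exact: finite_finset|move=> k _; exact: GkM_meas].
have eP : P (~` C) = (\sum_(k < K) fine (P (GkM k)))%:E.
  rewrite (partG _ mC) -sumEFin; apply: eq_bigr => k _; rewrite -Pfin; last exact: GkM_meas.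
  congr (P _); apply/seteqP; split => w.
    by move=> [/= Gw nC]; split => //; rewrite /= -Gw; apply/hpt.
  by move=> [/= Gw hM]; split => //; apply/hpt; rewrite Gw.
have := probability_setC P mC; rewrite setCK => ->.
rewrite eP -EFinB lee_fin.
have := total; have := final_sum; lra.
Qed.

End Main.

Theorem theorem3
  (R : realType) (d : measure_display) (Omega : measurableType d)
  (P : probability Omega R)
  (d1 d2 : measure_display) (X1 : measurableType d1) (Y : measurableType d2)
  (K : nat) (HK : (0 < K)%N)
  (Pi : 'I_K -> probability (X1 * Y)%type R)
  (q : 'I_K -> R) (Hq0 : forall k, 0 <= q k) (Hq1 : \sum_(k < K) q k = 1)
  (alpha : R) (Ha0 : 0 < alpha) (Ha1 : alpha < 1)
  (nk : 'I_K -> nat) (n : nat) (Hn : n = \sum_(k < K) nk k)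
  (g : 'I_n -> 'I_K)
  (Hg : forall (i : 'I_n) (k : 'I_K),
      (g i == k) = ((\sum_(j < K | (j < k)%N) nk j <= i)
                    && (i < \sum_(j < K | (j <= k)%N) nk j))%N)
  (Z : 'I_n -> Omega -> (X1 * Y)%type)
  (G : Omega -> 'I_K) (W : Omega -> (X1 * Y)%type)
  (HZm : forall i, measurable_fun setT (Z i))
  (HWm : measurable_fun setT W)
  (HGm : forall k, measurable (G @^-1` [set k]))
  (HZlaw : forall i A, measurable A -> P (Z i @^-1` A) = Pi (g i) A)
  (Htest : forall k B, measurable B ->
      P (G @^-1` [set k] `&` W @^-1` B) = ((q k)%:E * Pi k B)%E)
  (Hindep : forall (A : 'I_n -> set (X1 * Y)%type) (k : 'I_K) (B : set (X1 * Y)%type),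
      (forall i, measurable (A i)) -> measurable B ->
      P ((\bigcap_i (Z i @^-1` A i)) `&` (G @^-1` [set k] `&` W @^-1` B))
      = ((\prod_(i < n) P (Z i @^-1` A i)) * P (G @^-1` [set k] `&` W @^-1` B))%E)
  (s : 'I_K * X1 -> Y -> R)
  (Hs : forall k, measurable_fun setT (fun xy : (X1 * Y)%type => s (k, xy.1) xy.2)) :
  ((1 - alpha)%:E <=
   P [set w | gwcp_set s q alpha g (fun i => Z i w) (G w, (W w).1) (W w).2])%E.
Proof.
exact: (@main_result R d Omega P d1 d2 X1 Y K Pi q Hq0 Hq1 alpha Ha0 Ha1 n g Z G W HZm HWm HGm HZlaw Htest Hindep s Hs).
Qed.
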